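(* Let $f\in\mathfrak B^*((A,V);B;\alpha)$, let $s\ge1$, let $\psi:[0,\infty)\to[0,\infty)$ be a continuous increasing function with $\psi(0)=0$ and $\int_0^1\frac{\psi(t)^{1/s}}{t}\,dt<\infty$, and let $\{b_n\}_{n\in\mathbb N}\subset(0,\infty)$ be such that the series $\sum_{n=1}^\infty\frac{\ln b_n}{n^2}$ converges. Then $\liminf_{n\to\infty}n^s\,\psi\big(b_nE_n(f)\big)=0$.
   Context: $\mathbb F\in\{\mathbb R,\mathbb C\}$. $A$ is an infinite-dimensional separable Banach space over $\mathbb F$ and $V_0\subsetneq V_1\subsetneq\cdots\subset A$ are finite-dimensional subspaces whose union $V$ is dense in $A$. $B$ is a Banach space over $\mathbb F$, $\alpha$ a reasonable crossnorm on $A\otimes B$, $A\hat\otimes_\alpha B$ the completion. $E_n(x)=\inf_{h\in V_n\otimes B}\|x-h\|_{A\hat\otimes_\alpha B}$. $\mathfrak B^*((A,V);B;\alpha)$ is the set of $x\in A\hat\otimes_\alpha B$ with $\prod_{n\ge1}E_n(x)^{1/n^2}=0$, i.e. $\sum_n n^{-2}\ln E_n(x)=-\infty$ (with $\ln0=-\infty$). *)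

(* Defs.v *)
From Stdlib Require Import Reals.
Open Scope R_scope.

(* Real power with the convention 0^y = 0 (so that ln 0 = -oo behaves as
   in the paper); for x > 0 it is Rpower x y = exp (y ln x). *)
Definition rpow0 (x y : R) : R :=
  if Rle_dec x 0 then 0 else Rpower x y.

Definition IsInf (S : R -> Prop) (e : R) : Prop :=
  (forall r, S r -> e <= r) /\ (forall l, (forall r, S r -> l <= r) -> l <= e).

Definition BestApprox {X : Type} (dist : X -> X -> R) (W : nat -> X -> Prop)
  (x : X) (n : nat) (e : R) : Prop :=
  IsInf (fun r => exists h, W n h /\ r = dist x h) e.

(* prod_{n>=1} E_n^{1/n^2} = 0, as the limit of partial products. *)
Definition partial_prod (E : nat -> R) (N : nat) : R :=
  prod_f_R0 (fun k => rpow0 (E (S k)) (/ (INR (S k))^2)) N.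

Definition BstarCond (E : nat -> R) : Prop :=
  Un_cv (partial_prod E) 0.

Definition cont_on_nonneg (psi : R -> R) : Prop :=
  forall x, 0 <= x -> limit1_in psi (fun t => 0 <= t) (psi x) x.

(* int_0^1 g(t) dt < oo, as an improper Riemann integral at 0 of a
   nonnegative integrand: uniformly bounded integrals over [eps,1]. *)
Definition improper_int_finite_0_1 (g : R -> R) : Prop :=
  exists M : R, forall eps : R, 0 < eps <= 1 ->
    exists pr : Riemann_integrable g eps 1, RiemannInt pr <= M.

Definition log_series_converges (b : nat -> R) : Prop :=
  exists l : R, Un_cv (fun N => sum_f_R0 (fun k => ln (b (S k)) / (INR (S k))^2) N) l.

Definition liminf_is_zero (u : nat -> R) : Prop :=
  (forall eps, 0 < eps -> exists N, forall n, (N <= n)%nat -> - eps < u n) /\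
  (forall eps, 0 < eps -> forall N, exists n, (N <= n)%nat /\ u n < eps).

(* Main.v *)
Require Import Defs.
From Stdlib Require Import Reals Lra Lia Classical.
Open Scope R_scope.

Lemma sum_swap (F : nat -> nat -> R) (J K : nat) :
  sum_f_R0 (fun k => sum_f_R0 (fun j => F k j) J) K =
  sum_f_R0 (fun j => sum_f_R0 (fun k => F k j) K) J.
Proof.
  induction K as [|K IH]; simpl.
  - reflexivity.
  - rewrite IH. rewrite <- plus_sum. apply sum_eq. intros; reflexivity.
Qed.

Lemma telescope (g : nat -> R) (K : nat) :
  sum_f_R0 (fun k => g k - g (S k)) K = g 0%nat - g (S K).
Proof. induction K as [|K IH]; simpl; [ring| rewrite IH; ring]. Qed.

Lemma fin_min (f : nat -> R) (N : nat) :
  (forall n, (n <= N)%nat -> 0 < f n) ->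
  exists d, 0 < d /\ forall n, (n <= N)%nat -> d <= f n.
Proof.
  induction N as [|N IH]; intros H.
  - exists (f 0%nat). split; [apply H; lia|]. intros n Hn.
    replace n with 0%nat by lia. lra.
  - destruct IH as [d [Hd Hd']]. { intros n Hn; apply H; lia. }
    exists (Rmin d (f (S N))). split.
    + unfold Rmin; destruct (Rle_dec d (f (S N))); [lra| apply H; lia].
    + intros n Hn. destruct (Nat.eq_dec n (S N)) as [->|Hne].
      * apply Rmin_r.
      * apply Rle_trans with d; [apply Rmin_l| apply Hd'; lia].
Qed.

Lemma fin_max (f : nat -> R) (N : nat) :
  exists B, forall n, (n <= N)%nat -> f n <= B.
Proof.
  induction N as [|N IH].
  - exists (f 0%nat). intros n Hn. replace n with 0%nat by lia. lra.
  - destruct IH as [B HB]. exists (Rmax B (f (S N))).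
    intros n Hn. destruct (Nat.eq_dec n (S N)) as [->|Hne].
    + apply Rmax_r.
    + apply Rle_trans with B; [apply HB; lia| apply Rmax_l].
Qed.

Lemma cv_bounded_above (T : nat -> R) (l : R) :
  Un_cv T l -> exists B, forall n, T n <= B.
Proof.
  intros H. destruct (H 1 ltac:(lra)) as [N HN].
  destruct (fin_max T N) as [B HB].
  exists (Rmax B (l + 1)). intros n.
  destruct (Compare_dec.le_lt_dec n N) as [Hle|Hlt].
  - apply Rle_trans with B; [auto| apply Rmax_l].
  - apply Rle_trans with (l+1); [|apply Rmax_r].
    specialize (HN n ltac:(lia)). unfold Rdist in HN.
    apply Rabs_def2 in HN. lra.
Qed.

Definition indic (x y : R) : R := if Rlt_dec x y then 1 else 0.

Lemma indic_nonneg x y : 0 <= indic x y.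
Proof. unfold indic; destruct (Rlt_dec x y); lra. Qed.

Lemma half_pow_anti (m n : nat) : (m <= n)%nat -> (/2)^n <= (/2)^m.
Proof.
  induction 1. lra.
  simpl. assert (0 <= (/2)^m0) by (apply pow_le; lra). lra.
Qed.

Lemma half_pow_pos n : 0 < (/2)^n.
Proof. apply pow_lt; lra. Qed.

Lemma ln_le' x y : 0 < x -> x <= y -> ln x <= ln y.
Proof.
  intros Hx Hxy. destruct (Req_dec x y) as [->|Hne]; [lra|].
  left. apply ln_increasing; lra.
Qed.

Lemma neg_ln_half_pow x m : 0 < x -> (/2)^m <= x -> - ln x <= INR m * ln 2.
Proof.
  intros Hx Hm. apply ln_le' in Hm; [|apply half_pow_pos].
  rewrite ln_pow in Hm by lra. rewrite ln_Rinv in Hm by lra. lra.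
Qed.

Lemma sum_ge_count (F : nat -> R) J :
  (forall j, (j <= J)%nat -> 1 <= F j) -> INR (S J) <= sum_f_R0 F J.
Proof.
  induction J as [|J IH]; intros H.
  - specialize (H 0%nat ltac:(lia)). simpl. lra.
  - cbn [sum_f_R0]. rewrite (S_INR (S J)). specialize (IH (fun j Hj => H j ltac:(lia))).
    specialize (H (S J) ltac:(lia)). lra.
Qed.

Lemma sum_nonneg (F : nat -> R) J :
  (forall j, (j <= J)%nat -> 0 <= F j) -> 0 <= sum_f_R0 F J.
Proof.
  induction J as [|J IH]; intros H; simpl.
  - apply H; lia.
  - specialize (IH (fun j Hj => H j ltac:(lia))). specialize (H (S J) ltac:(lia)). lra.
Qed.

Lemma ln_ind_bound J x : 0 < x -> (/2)^(S J) <= x ->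
  - ln x <= ln 2 * (1 + sum_f_R0 (fun j => indic x ((/2)^(S j))) J).
Proof.
  pose proof ln_lt_2 as Hl2.
  induction J as [|J IH]; intros Hx HJ.
  - cbn [sum_f_R0]. pose proof (neg_ln_half_pow x 1 Hx HJ). simpl INR in H.
    pose proof (indic_nonneg x ((/2)^1)).
    assert (0 <= ln 2 * indic x ((/2)^1)) by (apply Rmult_le_pos; lra). lra.
  - destruct (Rle_dec ((/2)^(S J)) x) as [Hle|Hlt].
    + specialize (IH Hx Hle). cbn [sum_f_R0].
      pose proof (indic_nonneg x ((/2)^(S (S J)))).
      assert (0 <= ln 2 * indic x ((/2)^(S (S J)))) by (apply Rmult_le_pos; lra). lra.
    + apply Rnot_le_lt in Hlt.
      pose proof (neg_ln_half_pow x _ Hx HJ).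
      assert (INR (S J) <= sum_f_R0 (fun j => indic x ((/2)^(S j))) J).
      { apply sum_ge_count. intros j Hj. unfold indic.
        destruct (Rlt_dec x ((/2)^(S j))) as [|n]; [lra|].
        exfalso; apply n. pose proof (half_pow_anti (S j) (S J) ltac:(lia)). lra. }
      cbn [sum_f_R0].
      pose proof (indic_nonneg x ((/2)^(S (S J)))).
      assert (0 <= ln 2 * indic x ((/2)^(S (S J)))) by (apply Rmult_le_pos; lra).
      rewrite (S_INR (S J)) in H. nra.
Qed.

Lemma int_lb g lo hi m (pr : Riemann_integrable g lo hi) :
  lo <= hi -> (forall t, lo < t < hi -> m <= g t) -> m * (hi - lo) <= RiemannInt pr.
Proof.
  intros Hle H.
  rewrite <- (RiemannInt_P15 (RiemannInt_P14 lo hi m)).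
  apply RiemannInt_P19; auto.
Qed.

Lemma inv_sq_tel n : 1 <= n -> / n ^ 2 <= 2 * (/ n - / (n + 1)).
Proof.
  intros Hn.
  replace (2 * (/ n - / (n + 1))) with (2 * / (n * (n+1))) by (field; lra).
  replace (/ n ^ 2) with (/ (n*n)) by (f_equal; ring).
  apply Rmult_le_reg_l with (n * n * (n+1)); [nra|].
  replace (n * n * (n + 1) * / (n * n)) with (n+1) by (field; lra).
  replace (n * n * (n + 1) * (2 * / (n * (n + 1)))) with (2*n) by (field; lra).
  lra.
Qed.


Definition aa (psi : R -> R) (s : R) t := rpow0 (psi t) (/ s).

Lemma aa_nonneg (psi : R -> R) (s : R) t : 0 <= aa psi s t.
Proof. unfold aa, rpow0. destruct (Rle_dec (psi t) 0); [lra|unfold Rpower; left; apply exp_pos]. Qed.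

Lemma aa_mono (psi : R -> R) (s : R) (hs : 1 <= s)
  (hpsi_incr : forall x y, 0 <= x -> x < y -> psi x < psi y) x y : 0 <= x -> x <= y -> aa psi s x <= aa psi s y.
Proof.
  intros Hx Hxy. unfold aa, rpow0.
  assert (psi x <= psi y) by (destruct (Req_dec x y) as [->|]; [lra| left; apply hpsi_incr; lra]).
  destruct (Rle_dec (psi x) 0); destruct (Rle_dec (psi y) 0).
  - lra.
  - unfold Rpower; left; apply exp_pos.
  - lra.
  - apply Rle_Rpower_l; [left; apply Rinv_0_lt_compat; lra| lra].
Qed.

Lemma dyadic_int (psi : R -> R) (s : R) (hs : 1 <= s)
  (hpsi_incr : forall x y, 0 <= x -> x < y -> psi x < psi y) J (pr : Riemann_integrable (fun t => aa psi s t / t) ((/2)^(S J)) 1) :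
  /2 * sum_f_R0 (fun j => aa psi s ((/2)^(S j))) J <= RiemannInt pr.
Proof.
  induction J as [|J IH].
  - cbn [sum_f_R0]. revert pr. rewrite pow_1. intros pr.
    assert (E : /2 * aa psi s (/2) = aa psi s (/2) * (1 - /2)) by field.
    rewrite E. apply int_lb; [lra|].
    intros t Ht.
    assert (aa psi s (/2) <= aa psi s t) by (apply (aa_mono psi s hs hpsi_incr); lra).
    pose proof (aa_nonneg psi s t).
    assert (aa psi s t <= aa psi s t / t).
    { unfold Rdiv. replace (aa psi s t) with (aa psi s t * 1) at 1 by ring.
      apply Rmult_le_compat_l; [lra|]. rewrite <- Rinv_1. apply Rinv_le_contravar; lra. }
    lra.
  - set (c := (/2)^(S J)) in *.
    assert (Hc : 0 < c) by apply half_pow_pos.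
    assert (Hlo : (/2)^(S (S J)) = /2 * c) by reflexivity.
    assert (Hc1 : c <= 1) by (unfold c; apply (half_pow_anti 0 (S J)); lia).
    assert (Hr : (/2)^(S (S J)) <= c <= 1) by (rewrite Hlo; lra).
    pose (pr1 := RiemannInt_P22 pr Hr). pose (pr2 := RiemannInt_P23 pr Hr).
    rewrite <- (RiemannInt_P26 pr1 pr2 pr).
    specialize (IH pr2).
    assert (Hb : aa psi s ((/2)^(S (S J))) / c * (c - (/2)^(S (S J))) <= RiemannInt pr1).
    { apply int_lb; [lra|]. intros t Ht.
      assert (aa psi s ((/2)^(S (S J))) <= aa psi s t) by (apply (aa_mono psi s hs hpsi_incr); [left; apply half_pow_pos| lra]).
      pose proof (aa_nonneg psi s ((/2)^(S (S J)))).
      unfold Rdiv. apply Rle_trans with (aa psi s ((/ 2) ^ S (S J)) * / t).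
      + apply Rmult_le_compat_l; [lra|]. apply Rinv_le_contravar; lra.
      + apply Rmult_le_compat_r; [left; apply Rinv_0_lt_compat; lra| lra]. }
    cbn [sum_f_R0].
    replace (aa psi s ((/ 2) ^ S (S J)) / c * (c - (/ 2) ^ S (S J))) with (/2 * aa psi s ((/ 2) ^ S (S J))) in Hb
      by (rewrite Hlo; field; lra).
    lra.
Qed.


Theorem lemma5p1
  (X : Type) (dist : X -> X -> R)
  (hdist : forall x y, 0 <= dist x y)
  (W : nat -> X -> Prop)
  (hWne : forall n, exists h, W n h)
  (hWnest : forall n h, W n h -> W (S n) h)
  (f : X) (E : nat -> R)
  (hE : forall n, BestApprox dist W f n (E n))
  (hf : BstarCond E)
  (s : R) (hs : 1 <= s)
  (psi : R -> R)
  (hpsi_nonneg : forall t, 0 <= t -> 0 <= psi t)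
  (hpsi_cont : cont_on_nonneg psi)
  (hpsi_incr : forall x y, 0 <= x -> x < y -> psi x < psi y)
  (hpsi0 : psi 0 = 0)
  (hpsi_int : improper_int_finite_0_1 (fun t => rpow0 (psi t) (/ s) / t))
  (b : nat -> R) (hb : forall n, (1 <= n)%nat -> 0 < b n)
  (hbser : log_series_converges b) :
  liminf_is_zero (fun n => Rpower (INR n) s * psi (b n * E n)).
Proof.
  assert (E_nonneg : forall n, 0 <= E n).
  { intros n. destruct (hE n) as [_ H]. apply H. intros r [h [_ ->]]. apply hdist. }
  assert (E_step : forall n, E (S n) <= E n).
  { intros n. destruct (hE n) as [_ H]. apply H. intros r [h [Hh ->]].
    destruct (hE (S n)) as [H' _]. apply H'. exists h; auto. }
  assert (E_anti : forall n m, (n <= m)%nat -> E m <= E n).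
  { intros n m Hnm. induction Hnm; [lra| pose proof (E_step m); lra]. }
  assert (Rp_pos : forall x y, 0 < Rpower x y) by (intros; unfold Rpower; apply exp_pos).
  split.
  { intros eps Heps. exists 1%nat. intros n Hn.
    pose proof (Rp_pos (INR n) s).
    assert (0 <= psi (b n * E n)).
    { apply hpsi_nonneg. apply Rmult_le_pos; [left; apply hb; lia| apply E_nonneg]. }
    nra. }
  intros eps Heps N.
  destruct (classic (exists n, (N <= n)%nat /\ Rpower (INR n) s * psi (b n * E n) < eps)) as [Hex|Hnex];
    [exact Hex|exfalso].
  assert (Hge : forall n, (N <= n)%nat -> eps <= Rpower (INR n) s * psi (b n * E n)).
  { intros n Hn. apply Rnot_lt_le. intros Hlt. apply Hnex. exists n; auto. }
  set (N0 := S N).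
  set (x := fun n => b n * E n).
  set (a := aa psi s).
  set (c := Rpower eps (/ s)).
  assert (Hs0 : 0 < / s) by (apply Rinv_0_lt_compat; lra).
  assert (Hbig : forall n, (N0 <= n)%nat -> 0 < x n /\ c <= INR n * a (x n)).
  { intros n Hn. specialize (Hge n ltac:(unfold N0 in Hn; lia)).
    assert (Hn0 : 0 < INR n) by (apply lt_0_INR; unfold N0 in Hn; lia).
    assert (Hx0 : 0 <= x n) by (apply Rmult_le_pos; [left; apply hb; unfold N0 in Hn; lia| apply E_nonneg]).
    pose proof (Rp_pos (INR n) s) as Hp.
    assert (Hpsi : 0 < psi (x n)).
    { destruct (Rle_dec (psi (x n)) 0) as [Hle|Hgt]; [|lra].
      assert (psi (x n) = 0) by (pose proof (hpsi_nonneg _ Hx0); lra).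
      unfold x in *. rewrite H in Hge. lra. }
    split.
    - destruct (Req_dec (x n) 0) as [Hz|Hz]; [rewrite Hz, hpsi0 in Hpsi; lra| lra].
    - unfold a, aa, rpow0. destruct (Rle_dec (psi (x n)) 0) as [|_]; [lra|].
      replace (INR n) with (Rpower (Rpower (INR n) s) (/ s)) at 1.
      2:{ rewrite Rpower_mult. replace (s * / s) with 1 by (field; lra). apply Rpower_1; auto. }
      rewrite Rpower_mult_distr by auto.
      unfold c. apply Rle_Rpower_l; [lra|]. split; [lra|]. unfold x; lra. }
  assert (E_pos : forall n, 0 < E n).
  { assert (HN0 : 0 < E N0).
    { destruct (Hbig N0 (le_n _)) as [Hx _]. unfold x in Hx.
      destruct (Req_dec (E N0) 0) as [Hz|Hz]; [rewrite Hz in Hx; lra|].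
      pose proof (E_nonneg N0); lra. }
    intros n. destruct (Compare_dec.le_lt_dec n N0) as [Hle|Hlt].
    - pose proof (E_anti n N0 Hle); lra.
    - destruct (Hbig n ltac:(lia)) as [Hx _]. unfold x in Hx.
      destruct (Req_dec (E n) 0) as [Hz|Hz]; [rewrite Hz in Hx; lra|].
      pose proof (E_nonneg n); lra. }
  assert (x_pos : forall n, (1 <= n)%nat -> 0 < x n).
  { intros n Hn. unfold x. apply Rmult_lt_0_compat; auto. }
  assert (a_pos : forall n, (1 <= n)%nat -> 0 < a (x n)).
  { intros n Hn. unfold a, aa, rpow0.
    assert (0 < psi (x n)) by (rewrite <- hpsi0; apply hpsi_incr; [lra| auto]).
    destruct (Rle_dec (psi (x n)) 0); [lra| auto]. }
  destruct (fin_min (fun k => INR (S k) * a (x (S k))) N0) as [d [Hd Hd']].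
  { intros k Hk. apply Rmult_lt_0_compat; [apply lt_0_INR; lia| apply a_pos; lia]. }
  set (c' := Rmin c d).
  assert (Hc'pos : 0 < c') by (unfold c', Rmin; destruct (Rle_dec c d); [apply Rp_pos| lra]).
  assert (Key : forall k, c' <= INR (S k) * a (x (S k))).
  { intros k. destruct (Compare_dec.le_lt_dec k N0) as [Hle|Hlt].
    - apply Rle_trans with d; [apply Rmin_r| apply Hd'; auto].
    - apply Rle_trans with c; [apply Rmin_l| apply Hbig; lia]. }
  destruct hpsi_int as [M HM].
  assert (Hdy : forall J, sum_f_R0 (fun j => a ((/2)^(S j))) J <= 2*M).
  { intros J. destruct (HM ((/2)^(S J))) as [pr Hpr].
    { split; [apply half_pow_pos| apply (half_pow_anti 0 (S J)); lia]. }
    pose proof (dyadic_int psi s hs hpsi_incr J pr). unfold a. pose proof (Rle_trans _ _ _ H Hpr) as H2. unfold a. lra. }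
  set (w := fun k => / (INR (S k))^2).
  assert (Hw : forall K, sum_f_R0 w K <= 2).
  { intros K. apply Rle_trans with (sum_f_R0 (fun k => (/ INR (S k) - / INR (S (S k))) * 2) K).
    - apply sum_Rle. intros k _. unfold w. rewrite (S_INR (S k)).
      pose proof (inv_sq_tel (INR (S k))). assert (1 <= INR (S k)) by (apply (le_INR 1); lia). lra.
    - rewrite <- scal_sum. rewrite (telescope (fun k => / INR (S k))).
      assert (0 < / INR (S (S K))) by (apply Rinv_0_lt_compat, lt_0_INR; lia).
      simpl INR at 1. rewrite Rinv_1. lra. }
  assert (Hin : forall j K, sum_f_R0 (fun k => indic (x (S k)) ((/2)^(S j)) * w k) K
                  <= 2 * (a ((/2)^(S j)) / c')).
  { intros j K. set (al := a ((/2)^(S j))).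
    assert (Hal : 0 <= al) by apply aa_nonneg.
    set (phi := fun n => Rmin (/ INR n) (al / c')).
    assert (Hphi_nn : forall n, (1 <= n)%nat -> 0 <= phi n).
    { intros n Hn. unfold phi, Rmin. destruct (Rle_dec _ _).
      - left; apply Rinv_0_lt_compat, lt_0_INR; lia.
      - apply Rmult_le_pos; [auto| left; apply Rinv_0_lt_compat; auto]. }
    apply Rle_trans with (sum_f_R0 (fun k => (phi (S k) - phi (S (S k))) * 2) K).
    - apply sum_Rle. intros k _. unfold indic.
      set (n := INR (S k)).
      assert (Hn1 : 1 <= n) by (apply (le_INR 1); lia).
      assert (Hinv : / (n + 1) <= / n) by (apply Rinv_le_contravar; lra).
      destruct (Rlt_dec (x (S k)) ((/2)^(S j))) as [Hlt|Hnlt].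
      + assert (Hax : a (x (S k)) <= al).
        { apply (aa_mono psi s hs hpsi_incr); [left; apply x_pos; lia| left; exact Hlt]. }
        pose proof (Key k) as Kk. fold n in Kk.
        assert (Hq : / n <= al / c').
        { unfold Rdiv. apply Rmult_le_reg_l with (n * c'); [nra|].
          replace (n * c' * / n) with c' by (field; lra).
          replace (n * c' * (al * / c')) with (n * al) by (field; lra). nra. }
        unfold phi. rewrite (S_INR (S k)). fold n.
        rewrite Rmin_left by lra. rewrite Rmin_left by lra.
        unfold w. fold n. pose proof (inv_sq_tel n Hn1). lra.
      + unfold phi. rewrite (S_INR (S k)). fold n.
        assert (Rmin (/ (n+1)) (al / c') <= Rmin (/ n) (al / c')).
        { unfold Rmin. destruct (Rle_dec (/ (n+1)) (al/c')); destruct (Rle_dec (/ n) (al/c')); lra. }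
        lra.
    - rewrite <- scal_sum. rewrite (telescope (fun k => phi (S k))).
      pose proof (Hphi_nn (S (S K)) ltac:(lia)).
      assert (phi 1%nat <= al / c') by (unfold phi; apply Rmin_r). lra. }
  assert (Hsum : forall K, - ln 2 * (2 + 2 / c' * (2*M)) <= sum_f_R0 (fun k => ln (x (S k)) * w k) K).
  { intros K.
    destruct (fin_min (fun k => x (S k)) K) as [d2 [Hd2 Hd2']].
    { intros k _. apply x_pos; lia. }
    destruct (pow_lt_1_zero (/2) ltac:(rewrite Rabs_pos_eq; lra) d2 Hd2) as [J0 HJ0].
    assert (HJ : forall k, (k <= K)%nat -> (/2)^(S J0) <= x (S k)).
    { intros k Hk. specialize (HJ0 (S J0) ltac:(lia)). rewrite Rabs_pos_eq in HJ0 by (left; apply half_pow_pos).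
      specialize (Hd2' k Hk). simpl in Hd2'. lra. }
    pose proof ln_lt_2 as Hl2.
    apply Rle_trans with (sum_f_R0 (fun k => - ln 2 * (w k + sum_f_R0 (fun j => indic (x (S k)) ((/2)^(S j)) * w k) J0)) K).
    - rewrite (sum_eq _ (fun k => (w k + sum_f_R0 (fun j => indic (x (S k)) ((/2)^(S j)) * w k) J0) * (- ln 2)))
        by (intros; ring).
      rewrite <- scal_sum.
      rewrite plus_sum. rewrite sum_swap.
      pose proof (Hw K).
      assert (sum_f_R0 (fun j => sum_f_R0 (fun k => indic (x (S k)) ((/2)^(S j)) * w k) K) J0 <= 2 / c' * (2 * M)).
      { apply Rle_trans with (sum_f_R0 (fun j => a ((/2)^(S j)) * (2 / c')) J0).
        - apply sum_Rle. intros j _. pose proof (Hin j K). unfold Rdiv in *. lra.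
        - rewrite <- scal_sum. pose proof (Hdy J0).
          apply Rmult_le_compat_l; [|lra]. unfold Rdiv; apply Rmult_le_pos; [lra| left; apply Rinv_0_lt_compat; lra]. }
      nra.
    - apply sum_Rle. intros k Hk.
      pose proof (ln_ind_bound J0 (x (S k)) ltac:(apply x_pos; lia) (HJ k Hk)) as Hb.
      assert (Hwk : 0 <= w k) by (unfold w; left; apply Rinv_0_lt_compat, pow_lt, lt_0_INR; lia).
      rewrite <- scal_sum.
      set (SI := sum_f_R0 (fun j => indic (x (S k)) ((/2)^(S j))) J0) in *.
      apply Rmult_le_compat_r with (r := w k) in Hb; [|exact Hwk].
      nra. }
  destruct hbser as [l Hl]. destruct (cv_bounded_above _ _ Hl) as [B HB].
  set (C := ln 2 * (2 + 2 / c' * (2*M)) + B).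
  assert (Hterm : forall k, rpow0 (E (S k)) (/ (INR (S k))^2)
            = exp (ln (x (S k)) * w k - ln (b (S k)) / (INR (S k))^2)).
  { intros k. unfold rpow0. destruct (Rle_dec (E (S k)) 0) as [Hle|_].
    - pose proof (E_pos (S k)); lra.
    - unfold Rpower. f_equal. unfold x, w. rewrite ln_mult by (auto; apply hb; lia).
      unfold Rdiv. ring. }
  assert (Hprod : forall K, partial_prod E K =
            exp (sum_f_R0 (fun k => ln (x (S k)) * w k - ln (b (S k)) / (INR (S k))^2) K)).
  { intros K. unfold partial_prod. induction K as [|K IH].
    - simpl prod_f_R0. rewrite Hterm. reflexivity.
    - cbn [prod_f_R0 sum_f_R0]. rewrite IH, Hterm, exp_plus. reflexivity. }
  assert (Hlow : forall K, exp (- C) <= partial_prod E K).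
  { intros K. rewrite Hprod. rewrite minus_sum.
    pose proof (Hsum K). pose proof (HB K).
    assert (Hle : - C <= sum_f_R0 (fun k => ln (x (S k)) * w k) K -
        sum_f_R0 (fun k => ln (b (S k)) / INR (S k) ^ 2) K) by (unfold C; lra).
    destruct (Rle_lt_or_eq_dec _ _ Hle) as [Hlt|Heq].
    - left; apply exp_increasing; auto.
    - rewrite Heq; lra. }
  destruct (hf (exp (- C)) (exp_pos _)) as [N1 HN1].
  specialize (HN1 N1 (le_n _)). specialize (Hlow N1).
  unfold Rdist in HN1. rewrite Rminus_0_r in HN1.
  rewrite Rabs_pos_eq in HN1 by (pose proof (exp_pos (-C)); lra). lra.
Qed.
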